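(* When all requests are scheduled by a Byzantine adversary, the algorithm's total RB cost and its total latency due to the $\mathcal{Q}$ good queries are each $$O\Big(\big(\mathcal{I}+\mathcal{Q}+\sqrt{(\mathcal{I}+\mathcal{Q})\,\mathcal{B}}\big)\,\ell_M^2\Big),$$ where this bound includes the cost of the good insertions.
   Context: Model. A hash table has $t$ indices with chaining. The objects at an index form a list, new objects are appended at the tail, and $L_i$ denotes the current number of objects in the list at index $i$. The depth of an object is its position counted from the head of its list (the head has depth $1$). Algorithm \textsc{Depth Charge}: - Inserting at index $i$ costs the inserter an RB (resource-burning) cost of $L_i+1$ and has latency $1$. - Querying a present object at depth $\Delta$ costs $\Delta$, has latency $\Delta$, and then moves the object to the head of its list. - Querying an absent object costs $L_i$. Good objects (inserted by clients) go to uniformly random indices; clients query only good objects. The adversary inserts bad objects at indices of its choice and may query any object. Notation. $\mathcal{I}$ is the number of good insertions. $\mathcal{Q}$ is the number of good queries for objects present in the table. $\mathcal{B}$ is the adversary's total RB cost. $\ell_M$ is the maximum, over indices, of the maximum number of good objects ever present in that index. *)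

(* Defs.v *)
From mathcomp Require Import all_boot.
From Stdlib Require Import Reals.

Set Implicit Arguments.
Unset Strict Implicit.
Unset Printing Implicit Defensive.

(* An object is a pair (identifier, is_good).  Identifiers are fresh:
   the object inserted at step n of the execution gets identifier n. *)
Definition obj := (nat * bool)%type.

(* A hash table: index |-> list at that index (head of the list first). *)
Definition table := nat -> seq obj.

Definition empty_table : table := fun _ => [::].

Definition upd (T : table) (i : nat) (s : seq obj) : table :=
  fun j => if j == i then s else T j.

(* GIns i : a client inserts a new good object at index i
   (i is the uniformly random index; here it is arbitrary).
   GQry i x : a client queries object x, which hashes to index i.
   BQry i x : the adversary queries object x (present or absent), hashing
   to index i. *)
Inductive op :=
| GIns of nat
| BIns of nat
| GQry of nat & nat
| BQry of nat & nat.

Definition is_good_op (o : op) : bool :=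
  match o with GIns _ | GQry _ _ => true | _ => false end.

Definition is_gins (o : op) : bool := if o is GIns _ then true else false.
Definition is_gqry (o : op) : bool := if o is GQry _ _ then true else false.

(* 0-based position of object x in list s (size s if absent);
   the depth of a present object is this position + 1. *)
Definition pos (s : seq obj) (x : nat) : nat := find (fun o : obj => o.1 == x) s.

Definition move_to_front (s : seq obj) (k : nat) : seq obj :=
  nth (0, false) s k :: (take k s ++ drop k.+1 s).

Definition next_table (T : table) (n : nat) (o : op) : table :=
  match o with
  | GIns i => upd T i (rcons (T i) (n, true))
  | BIns i => upd T i (rcons (T i) (n, false))
  | GQry i x | BQry i x =>
      let k := pos (T i) x in
      if k < size (T i) then upd T i (move_to_front (T i) k) else T
  end.

Definition rb_cost (T : table) (o : op) : nat :=
  match o with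
  | GIns i | BIns i => (size (T i)).+1
  | GQry i x | BQry i x =>
      let k := pos (T i) x in
      if k < size (T i) then k.+1 else size (T i)
  end.

Definition latency (T : table) (o : op) : nat :=
  match o with
  | GIns _ | BIns _ => 1
  | _ => rb_cost T o
  end.

Fixpoint exec (T : table) (n : nat) (tr : seq op) : seq (table * op) :=
  match tr with
  | [::] => [::]
  | o :: tr' => (T, o) :: exec (next_table T n o) n.+1 tr'
  end.

Fixpoint states (T : table) (n : nat) (tr : seq op) : seq table :=
  match tr with
  | [::] => [:: T]
  | o :: tr' => T :: states (next_table T n o) n.+1 tr'
  end.

Definition valid_req (t : nat) (T : table) (o : op) : bool :=
  match o with
  | GIns i | BIns i => i < t
  | GQry i x => (i < t) && ((x, true) \in T i)
  | BQry i _ => i < t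
  end.

Definition valid (t : nat) (tr : seq op) : bool :=
  all (fun p : table * op => valid_req t p.1 p.2) (exec empty_table 0 tr).

Definition n_good_ins (tr : seq op) : nat := count is_gins tr.
Definition n_good_qry (tr : seq op) : nat := count is_gqry tr.

Definition adv_cost (tr : seq op) : nat :=
  \sum_(p <- exec empty_table 0 tr | ~~ is_good_op p.2) rb_cost p.1 p.2.

Definition good_cost (tr : seq op) : nat :=
  \sum_(p <- exec empty_table 0 tr | is_good_op p.2) rb_cost p.1 p.2.

Definition good_qry_latency (tr : seq op) : nat :=
  \sum_(p <- exec empty_table 0 tr | is_gqry p.2) latency p.1 p.2.

Definition ell_M (t : nat) (tr : seq op) : nat :=
  \max_(i < t) \max_(T <- states empty_table 0 tr) count snd (T i).

Definition dc_bound (t : nat) (tr : seq op) : R :=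
  let IQ := INR (n_good_ins tr + n_good_qry tr) in
  (IQ + sqrt (IQ * INR (adv_cost tr))) * INR (ell_M t tr) ^ 2.

(* Main.v *)
Require Import Defs.
From mathcomp Require Import all_boot zify.
From Stdlib Require Import Reals Lra Psatz.

Fixpoint phia (s : seq obj) (c : nat) : nat :=
  match s with [::] => 0 | o :: s' => if o.2 then c*c + phia s' c else phia s' c.+1 end.
Definition gd (s : seq obj) := count snd s.
Definition bd (s : seq obj) := count (fun o : obj => ~~ o.2) s.
Definition phiL (L : nat) s := phia s 0 + 2 * (L - gd s) * (bd s * bd s).

Lemma size_gb s : size s = gd s + bd s.
Proof. elim: s => //= o s ->; rewrite /gd /bd /=; case: o.2 => /=; lia. Qed.

Lemma phia_cat s1 s2 c : phia (s1 ++ s2) c = phia s1 c + phia s2 (c + bd s1).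
Proof.
elim: s1 c => [|o s1 IH] c /=; first by rewrite addn0.
rewrite /bd /=; case: o.2 => /=; rewrite IH /bd; [rewrite add0n; lia|].
by rewrite add1n addSnnS.
Qed.

Lemma phia_S s c : phia s c.+1 <= phia s c + gd s * (2 * (c + bd s) + 1).
Proof.
elim: s c => [|o s IH] c //=.
rewrite /gd /bd /=; case: o.2 => /=.
- have := IH c; rewrite /gd /bd; nia.
- have := IH c.+1; rewrite /gd /bd; nia.
Qed.

Lemma mtf_cat p y q : move_to_front (p ++ y :: q) (size p) = y :: p ++ q.
Proof.
rewrite /move_to_front drop_cat ltnNge leqnSn /= subSnn nth_cat ltnn subnn /=.
by rewrite take_cat ltnn subnn take0 cats0 drop0.
Qed.

Lemma gd_cat s1 s2 : gd (s1 ++ s2) = gd s1 + gd s2.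
Proof. by rewrite /gd count_cat. Qed.
Lemma bd_cat s1 s2 : bd (s1 ++ s2) = bd s1 + bd s2.
Proof. by rewrite /bd count_cat. Qed.

Lemma phiL_rcons_bad L s n : gd s <= L ->
  phiL L (rcons s (n,false)) <= phiL L s + 4*L*(size s).+1.
Proof.
move=> H; rewrite /phiL -cats1 phia_cat gd_cat bd_cat /= size_gb /gd /bd /=.
rewrite -/(gd s) -/(bd s) addn0 !addn0.
set g := gd s in H *; set b := bd s.
have : L - g <= L by lia.
set m := L - g; nia.
Qed.

Lemma phiL_rcons_good L s n : gd s < L ->
  phiL L (rcons s (n,true)) + bd s * bd s = phiL L s /\ (size s).+1 <= L + bd s.
Proof.
move=> H; rewrite /phiL -cats1 phia_cat gd_cat bd_cat /= size_gb /gd /bd /=.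
rewrite -/(gd s) -/(bd s) !addn0 !add0n.
set g := gd s in H *; set b := bd s.
have -> : L - (g + 1) = (L - g) - 1 by lia.
have : 1 <= L - g by lia.
set m := L - g; split; [nia | lia].
Qed.

Lemma phiL_mtf_good L p y q : y.2 = true -> gd (p ++ y :: q) <= L ->
  phiL L (y :: p ++ q) + bd p * bd p = phiL L (p ++ y :: q) /\ (size p).+1 <= L + bd p.
Proof.
move=> Hy H.
have Eg : gd (y :: p ++ q) = gd (p ++ y :: q) by rewrite /gd /= !count_cat /=; lia.
have Eb : bd (y :: p ++ q) = bd (p ++ y :: q) by rewrite /bd /= !count_cat /=; lia.
rewrite /phiL Eg Eb /= Hy !phia_cat /= Hy add0n.
split; first lia.
move: H; rewrite size_gb gd_cat /gd /= Hy -/(gd p); lia.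
Qed.

Lemma phiL_mtf_bad L p y q : y.2 = false -> gd (p ++ y :: q) <= L ->
  phiL L (y :: p ++ q) <= phiL L (p ++ y :: q) + 4 * L * (size p).+1.
Proof.
move=> Hy H.
have Eg : gd (y :: p ++ q) = gd (p ++ y :: q) by rewrite /gd /= !count_cat /=; lia.
have Eb : bd (y :: p ++ q) = bd (p ++ y :: q) by rewrite /bd /= !count_cat /=; lia.
rewrite /phiL Eg Eb /= Hy !phia_cat /= Hy.
have := phia_S p 0.
have Hg : gd p <= L by move: H; rewrite gd_cat; lia.
have Hs := size_gb p.
rewrite !add0n.
set a := phia p 1; set a0 := phia p 0.
rewrite add1n.
set g := gd p in Hg Hs *; set b := bd p in Hs *.
set K := 2 * _ * _; set u := phia q _. rewrite Hs. nia.
Qed.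

Definition Phi (L t : nat) (T : table) := \sum_(i < t) phiL L (T i).
Definition Inv (T : table) (n : nat) :=
  forall i, uniq (map fst (T i)) && all (fun o : obj => o.1 < n) (T i).

Lemma Phi_upd L t T i s : i < t ->
  Phi L t (upd T i s) + phiL L (T i) = Phi L t T + phiL L s.
Proof.
move=> it; rewrite /Phi [in LHS](bigD1 (Ordinal it)) //= [in RHS](bigD1 (Ordinal it)) //=.
rewrite {1}/upd eqxx.
rewrite (eq_bigr (fun j : 'I_t => phiL L (T j))); first lia.
move=> j /= Hj; rewrite /upd; suff -> : (j : nat) == i = false by [].
by apply/negbTE; apply: contra Hj => /eqP Hj; apply/eqP; apply: val_inj.
Qed.

Lemma qry_split (s : seq obj) k : k < size s ->
  exists p q, s = p ++ nth (0,false) s k :: q /\ size p = k.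
Proof.
move=> Hk; exists (take k s), (drop k.+1 s); split.
- by rewrite -drop_nth // cat_take_drop.
- by rewrite size_take Hk.
Qed.

Lemma mtf_perm (s : seq obj) k : k < size s -> perm_eq (move_to_front s k) s.
Proof.
move=> /qry_split [p [q [Es Ek]]].
move: Es; set y := nth _ _ _ => Es.
rewrite Es -Ek mtf_cat perm_sym (perm_catCA p [:: y] q).
by [].
Qed.

Lemma uniq_fst (s : seq obj) y z : uniq (map fst s) -> y \in s -> z \in s -> y.1 = z.1 -> y = z.
Proof.
elim: s => [|a s IH] //= /andP [Ha Hu].
rewrite !in_cons => /orP [/eqP ->|Hy] /orP [/eqP ->|Hz] E //.
- by move: Ha; rewrite E (map_f fst Hz).
- by move: Ha; rewrite -E (map_f fst Hy).
- exact: IH.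
Qed.

Lemma Inv_S T n : Inv T n -> Inv T n.+1.
Proof.
move=> HI k; move/andP: (HI k) => [-> Ha] /=.
by apply: sub_all Ha => o' /= H; apply: ltnW.
Qed.

Lemma Inv_upd T n i s : Inv T n -> uniq (map fst s) && all (fun o : obj => o.1 < n) s ->
  Inv (upd T i s) n.
Proof. by move=> HI Hs k; rewrite /upd; case: ifP. Qed.

Lemma Inv_next T n o : Inv T n -> Inv (next_table T n o) n.+1.
Proof.
move=> HI; have HS := @Inv_S T n HI.
have Hins : forall i b, Inv (upd T i (rcons (T i) (n, b))) n.+1.
  move=> i b; apply: Inv_upd => //.
  move/andP: (HI i) => [Hu Ha].
  rewrite map_rcons rcons_uniq Hu all_rcons /= ltnSn andbT /=.
  apply/andP; split.
  + apply/negP => /mapP [o' Ho' /= E]. by move: (allP Ha o' Ho'); rewrite -E ltnn.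
  + by apply: sub_all Ha => o' /= H; apply: ltnW.
case: o => [i|i|i x|i x] /=; try exact: Hins;
  (case: ifP => Hk; last done);
  apply: Inv_upd => //;
  have Hp := @mtf_perm _ _ Hk;
  by rewrite (perm_uniq (perm_map fst Hp)) (perm_all _ Hp).
Qed.

Lemma mtf_lemma L s k : k < size s -> gd s <= L ->
  ((nth (0,false) s k).2 = true -> exists a, phiL L (move_to_front s k) + a*a = phiL L s /\ k.+1 <= L + a) /\
  ((nth (0,false) s k).2 = false -> phiL L (move_to_front s k) <= phiL L s + 4*L*k.+1).
Proof.
move=> Hk Hg; have [p [q [Es Ek]]] := qry_split _ _ Hk.
move: Es; set y := nth _ _ _ => Es.
rewrite Es -Ek mtf_cat; rewrite Es in Hg; split.
- move=> Hy; exists (bd p); exact: phiL_mtf_good.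
- move=> Hy; exact: phiL_mtf_bad.
Qed.

Lemma step L t T n o : Inv T n -> valid_req t T o ->
  (forall i, i < t -> gd (T i) <= L) -> (forall i, i < t -> gd (next_table T n o i) <= L) ->
  exists x, if is_good_op o then Phi L t (next_table T n o) + x*x <= Phi L t T /\ rb_cost T o <= L + x
            else Phi L t (next_table T n o) <= Phi L t T + 4*L*rb_cost T o.
Proof.
move=> HI Hv Hg Hg'.
case: o Hv Hg' => [i|i|i x|i x] /= Hv Hg'.
- have Hgi := Hg' i Hv; rewrite /upd eqxx /gd -cats1 count_cat /= addn0 addn1 -/(gd _) in Hgi.
  have [E1 E2] := phiL_rcons_good L _ n Hgi.
  exists (bd (T i)); have := Phi_upd L _ T _ (rcons (T i) (n, true)) Hv. split; lia.
- exists 0; have := phiL_rcons_bad L _ n (Hg i Hv).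
  have := Phi_upd L _ T _ (rcons (T i) (n, false)) Hv. lia.
- move/andP: Hv => [it Hx].
  have Hh : has (fun o : obj => o.1 == x) (T i) by apply/hasP; exists (x, true).
  have Hk : Defs.pos (T i) x < size (T i) by rewrite /Defs.pos -has_find.
  rewrite Hk.
  have Hy : nth (0,false) (T i) (Defs.pos (T i) x) = (x, true).
    move/andP: (HI i) => [Hu _]; apply: (uniq_fst _ _ _ Hu) => //.
    + exact: mem_nth.
    + by apply/eqP; apply: (nth_find (0,false) Hh).
  have [H1 _] := mtf_lemma L _ _ Hk (Hg i it).
  have Hy2 : (nth (0,false) (T i) (Defs.pos (T i) x)).2 = true by rewrite Hy.
  have [a [Ha1 Ha2]] := H1 Hy2.
  exists a; have := Phi_upd L _ T _ (move_to_front (T i) (Defs.pos (T i) x)) it. split; lia.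
- exists 0.
  case: ifP => Hk; last lia.
  have [H1 H2] := mtf_lemma L _ _ Hk (Hg i Hv).
  have := Phi_upd L _ T _ (move_to_front (T i) (Defs.pos (T i) x)) Hv.
  case E: (nth (0, false) (T i) (Defs.pos (T i) x)).2.
  + have [a [Ha1 Ha2]] := H1 E; lia.
  + have := H2 E; lia.
Qed.

Lemma states_head T n tr : List.In T (states T n tr).
Proof. by case: tr => [|o tr] /=; left. Qed.

Lemma run L t : forall tr T n, Inv T n ->
  all (fun p : table * op => valid_req t p.1 p.2) (exec T n tr) ->
  (forall T0, List.In T0 (states T n tr) -> forall i, i < t -> gd (T0 i) <= L) ->
  exists xs : seq nat, size xs = count is_good_op tr /\
   \sum_(p <- exec T n tr | is_good_op p.2) rb_cost p.1 p.2 <= L * size xs + sumn xs /\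
   sumn [seq x*x | x <- xs] <= Phi L t T + 4*L* \sum_(p <- exec T n tr | ~~ is_good_op p.2) rb_cost p.1 p.2.
Proof.
elim=> [|o tr IH] T n HI Hv Hs.
  by exists [::]; rewrite /= !big_nil.
move: Hv => /= /andP [Hv1 Hv2].
have Hg : forall i, i < t -> gd (T i) <= L by apply: Hs; left.
have Hg' : forall i, i < t -> gd (next_table T n o i) <= L.
  by apply: Hs; right; apply: states_head.
have [x Hx] := step L t T n o HI Hv1 Hg Hg'.
have [xs [E1 [E2 E3]]] := IH _ _ (Inv_next T n o HI) Hv2 (fun T0 H => Hs T0 (or_intror H)).
rewrite !big_cons /=.
case: (is_good_op o) Hx => /= [[Hx1 Hx2]|Hx].
- exists (x :: xs) => /=; rewrite E1; split => //; split; lia.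
- exists xs; rewrite E1; split => //; split; lia.
Qed.

Lemma amgm a b : 2 * a * b <= a * a + b * b.
Proof.
case: (leqP a b) => H.
- have [d ->] : exists d, b = a + d by exists (b - a); lia. nia.
- have [d ->] : exists d, a = b + d by exists (a - b); lia. nia.
Qed.

Lemma cauchy (xs : seq nat) : sumn xs * sumn xs <= size xs * sumn [seq x*x | x <- xs].
Proof.
elim: xs => [|x xs IH] //=.
set S := sumn xs in IH *; set N := size xs in IH *; set S2 := sumn _ in IH *.
suff H : 2 * S * x <= N * (x * x) + S2 by nia.
case: N IH => [|N] IH.
- have -> : S = 0 by nia. lia.
- (* N.+1 * (N.+1 x^2 + S2 - 2 S x) >= (N.+1 x - S)^2 >= 0 *)
  have H1 : N.+1 * (2 * S * x) <= N.+1 * (N.+1 * (x * x) + S2).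
    have : 2 * (N.+1 * x) * S <= (N.+1 * x) * (N.+1 * x) + S * S.
      exact: amgm.
    nia.
  rewrite leq_pmul2l // in H1.
Qed.

Lemma count_good tr : count is_good_op tr = n_good_ins tr + n_good_qry tr.
Proof. rewrite /n_good_ins /n_good_qry; elim: tr => [|[i|i|i x|i x] tr IH] //=; lia. Qed.

Lemma lat_le (s : seq (table * op)) :
  \sum_(p <- s | is_gqry p.2) latency p.1 p.2 <= \sum_(p <- s | is_good_op p.2) rb_cost p.1 p.2.
Proof.
elim: s => [|[T o] s IH]; first by rewrite !big_nil.
rewrite !big_cons /=; case: o => [i|i|i x|i x] /=; lia.
Qed.

Lemma max_in (A : Type) (F : A -> nat) (r : seq A) x : List.In x r -> F x <= \max_(y <- r) F y.
Proof.
elim: r => [|a r IH] //= [->|H]; rewrite big_cons leq_max ?leqnn //.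
by rewrite IH ?orbT.
Qed.

Lemma Phi0 L t : Phi L t empty_table = 0.
Proof. by rewrite /Phi big1 // => i _; rewrite /phiL /=; lia. Qed.

Lemma nat_bound t tr : valid t tr ->
  let l := ell_M t tr in let N := n_good_ins tr + n_good_qry tr in
  exists S1, good_cost tr <= l * l * N + S1 /\ S1 * S1 <= (2*l*l) * (2*l*l) * (N * adv_cost tr).
Proof.
move=> Hv l N.
have Hs : forall T0, List.In T0 (states empty_table 0 tr) -> forall i, i < t -> gd (T0 i) <= l.
  move=> T0 HT i it; rewrite /gd /l /ell_M.
  apply: (leq_trans _ (@leq_bigmax _ (fun j : 'I_t => \max_(T <- states empty_table 0 tr) count snd (T j)) (Ordinal it))).
  exact: (max_in _ (fun T => count snd (T i)) _ _ HT).
have HI : Inv empty_table 0 by [].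
have [xs [E1 [E2 E3]]] := run l t tr empty_table 0 HI Hv Hs.
rewrite Phi0 add0n -/(adv_cost tr) in E3.
rewrite -/(good_cost tr) E1 count_good -/N in E2.
have C := cauchy xs; rewrite E1 count_good -/N in C.
clearbody l N.
have Hl4 : forall m, m <= m*m*m*m by case=> // m; nia.
have Hl2 : forall m, m <= m*m by case=> // m; nia.
exists (sumn xs); split.
- have : l * N <= l * l * N by apply: leq_mul (Hl2 l) (leqnn N). lia.
- apply: (leq_trans C); apply: (leq_trans (leq_mul (leqnn N) E3)).
  have H4 := leq_mul (leqnn (4*(N*adv_cost tr))) (Hl4 l). nia.
Qed.

Lemma INR_mul m n : INR (m * n) = (INR m * INR n)%R.
Proof. exact: mult_INR. Qed.
Lemma INR_add m n : INR (m + n) = (INR m + INR n)%R.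
Proof. exact: plus_INR. Qed.
Lemma INR_le m n : m <= n -> (INR m <= INR n)%R.
Proof. by move=> /leP; apply: le_INR. Qed.

Theorem lemma7 :
  exists C : R, (0 < C)%R /\
  forall (t : nat) (tr : seq op), valid t tr ->
    (INR (good_cost tr) <= C * dc_bound t tr)%R /\
    (INR (good_qry_latency tr) <= C * dc_bound t tr)%R.
Proof.
exists 2%R; split; first lra.
move=> t tr Hv.
have [S1 [H1 H2]] := nat_bound t tr Hv.
have key : (INR (good_cost tr) <= 2 * dc_bound t tr)%R.
  rewrite /dc_bound.
  set l := ell_M t tr in H1 H2 *; set N := n_good_ins tr + n_good_qry tr in H1 H2 *.
  set B := adv_cost tr in H2 *.
  have A1 := INR_le _ _ H1. rewrite INR_add !INR_mul in A1.
  have A2 : (INR S1 <= 2 * INR l * INR l * sqrt (INR N * INR B))%R.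
    rewrite -[INR S1]sqrt_square; last exact: pos_INR.
    have A3 := INR_le _ _ H2. rewrite !INR_mul /= in A3.
    apply: Rle_trans (sqrt_le_1_alt _ _ A3) _.
    have Hp : (0 <= (1+1) * INR l * INR l * ((1+1) * INR l * INR l))%R.
      have := pos_INR l; nra.
    rewrite sqrt_mult_alt //.
    rewrite sqrt_square; last by have := pos_INR l; nra.
    apply: Req_le; ring.
  have Hs := sqrt_pos (INR N * INR B).
  have Hl := pos_INR l; have HN := pos_INR N.
  simpl. nra.
split => //.
apply: Rle_trans key.
apply: INR_le; exact: lat_le.
Qed.
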